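(* Let $d\ge2$, $n\ge1$, $d\le t\le dn$, let $\gamma$ be a positive conductivity on the lattice graph below, fix $p\in L_t$, and let $M_p=\mathcal N(p)\cap(J_{t-1}^{\mathcal S}\cup L_{t-1}^{\mathcal S})$. Write $W=L_{t-1}^{\mathcal S}\cup J_{t-1}^{\mathcal S}$. Then: (i) the vectors $\{\mathbf v_q|_{W\setminus M_p}:q\in L_t^{\mathcal S}\setminus\{p\}\}$ are linearly independent; (ii) if $\mathbf w\in\operatorname{span}\{\mathbf v_q|_{W}:q\in L_t^{\mathcal S}\}$ is supported in $M_p$, then $\mathbf w=\alpha\,\mathbf v_p|_{W}$ for some $\alpha\in\mathbb R$.
   Context: Lattice: $D=\{x\in\mathbb Z^d:1\le x_i\le n\ \forall i\}$, $\partial D=\{p\in\mathbb Z^d:\min_{q\in D}\|q-p\|_{\ell^1}=1\}$; $E$ = unordered pairs $pq\subseteq D\cup\partial D$ with $\|p-q\|_{\ell^1}=1$, not both in $\partial D$; $\mathcal N(p)=\{q:pq\in E\}$. Conductivity $\gamma:E\to(0,\infty)$, symmetric. For $q\in D\cup\partial D$, $\mathbf v_q\in\mathbb R^{D\cup\partial D}$ has $(\mathbf v_q)_r=\gamma_{qr}$ for $r\in\mathcal N(q)$, $(\mathbf v_q)_q=-\sum_{r\in\mathcal N(q)}\gamma_{qr}$, and $0$ elsewhere. With $s(x)=\sum_ix_i$: $L_t=\{x\in D:s(x)=t\}$, $L_t^{\mathcal S}=\{x\in D:s(x)\le t\}$, $K_t^+=\{x\in\partial D:s(x)=t,\max_ix_i=n+1\}$,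 $K_t^-=\{x\in\partial D:s(x)=t,\min_ix_i=0\}$, $K_t^{\mathcal S\pm}=\bigcup_{\ell\le t}K_\ell^\pm$, $J_t^{\mathcal S}=K_t^{\mathcal S-}\cup K_{t+1}^{\mathcal S+}$. *)

(* Defs.v *)
From HB Require Import structures.
From mathcomp Require Import all_boot all_order all_algebra.
From mathcomp Require Import reals.
Set Implicit Arguments. Unset Strict Implicit. Unset Printing Implicit Defensive.
Import Order.TTheory GRing.Theory Num.Theory.
Local Open Scope ring_scope.

Section Lattice.
Variables (d n : nat).

(* Points of the box {0,...,n+1}^d; D ∪ ∂D is contained in it. Coordinate
   values are the integer coordinates. *)
Definition pt := {ffun 'I_d -> 'I_n.+2}.

Definition coord (x : pt) (i : 'I_d) : nat := nat_of_ord (x i).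

Definition absdiff (a b : nat) : nat := ((a - b) + (b - a))%N.

Definition l1 (x y : pt) : nat := (\sum_(i < d) absdiff (coord x i) (coord y i))%N.

Definition inD (x : pt) : bool := [forall i, (1 <= coord x i <= n)%N].
Definition Dset : {set pt} := [set x | inD x].

(* ∂D = {p : min_{q in D} ||q - p||_1 = 1}: some q in D at distance 1 and
   none at distance 0 *)
Definition inBd (x : pt) : bool :=
  [exists q, inD q && (l1 q x == 1%N)] && [forall q, inD q ==> (l1 q x != 0%N)].
Definition Bd : {set pt} := [set x | inBd x].

Definition inV (x : pt) : bool := inD x || inBd x.

Definition edge (x y : pt) : bool :=
  [&& inV x, inV y, l1 x y == 1%N & ~~ (inBd x && inBd y)].

Definition nbr (x : pt) : {set pt} := [set y | edge x y].

(* the vector v_q in R^{D ∪ ∂D} (as a function on the box, zero elsewhere) *)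
Definition vvec (R : realType) (gamma : pt -> pt -> R) (q r : pt) : R :=
  if r \in nbr q then gamma q r
  else if r == q then - \sum_(s in nbr q) gamma q s else 0.

Definition ssum (x : pt) : nat := (\sum_(i < d) coord x i)%N.

Definition Lt (t : nat) : {set pt} := [set x | inD x & ssum x == t].
Definition LtS (t : nat) : {set pt} := [set x | inD x & (ssum x <= t)%N].
(* max_i x_i = n+1  (coordinates are <= n+1) *)
Definition Kp (t : nat) : {set pt} :=
  [set x | [&& inBd x, ssum x == t & [exists i, coord x i == n.+1]]].
Definition Km (t : nat) : {set pt} :=
  [set x | [&& inBd x, ssum x == t & [exists i, coord x i == 0%N]]].
Definition KpS (t : nat) : {set pt} := \bigcup_(l < t.+1) Kp l.
Definition KmS (t : nat) : {set pt} := \bigcup_(l < t.+1) Km l.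
Definition JS (t : nat) : {set pt} := KmS t :|: KpS t.+1.

End Lattice.

Definition lin_indep (R : realType) (I : finType) (A B : {set I})
  (f : I -> I -> R) : Prop :=
  forall c : I -> R,
    (forall r, r \in B -> \sum_(q in A) c q * f q r = 0) ->
    forall q, q \in A -> c q = 0.

Definition in_span (R : realType) (I : finType) (A B : {set I})
  (f : I -> I -> R) (w : I -> R) : Prop :=
  exists c : I -> R, forall r, r \in B -> w r = \sum_(q in A) c q * f q r.

(* Main.v *)
From Pilot Require Import Defs.
From HB Require Import structures.
From mathcomp Require Import all_boot all_order all_algebra.
From mathcomp Require Import reals.
From mathcomp Require Import zify.
Import Order.TTheory GRing.Theory Num.Theory.

Section Aux.
Set Implicit Arguments. Unset Strict Implicit. Unset Printing Implicit Defensive.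
Lemma lowerA (a b M s1 s2 : nat) : a < M -> s1 < s2 -> s1 * M + a < s2 * M + b.
Proof.
move=> h1 h2; have h : s1.+1 * M <= s2 * M by rewrite leq_mul2r h2 orbT.
move: h; rewrite mulSn; lia.
Qed.
Lemma tailA (D I L a pi ql pl psr psq psq' : nat) : I < D -> L < D -> 0 < a -> a < pi ->
  (ql < pl -> I < L) ->
  psr + (D - I) * minn a pi = psq + (D - I) * minn a.-1 pi ->
  psq' + (D - L) * minn ql pl = psr + (D - L) * minn ql.+1 pl ->
  psq' < psq.
Proof.
move=> iD lD a0 api hil e1 e2.
have m1 : minn a pi = a by lia.
have m2 : minn a.-1 pi = a.-1 by lia.
have e3 : (D - I) * a = (D - I) * a.-1 + (D - I) by rewrite -mulnSr; congr (_ * _); lia.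
rewrite m1 m2 e3 in e1.
case: (ltnP ql pl) => Hql.
  have il := hil Hql.
  have m3 : minn ql.+1 pl = ql.+1 by lia.
  have m4 : minn ql pl = ql by lia.
  rewrite m3 m4 mulnS in e2.
  move: e1 e2; set x := (_ * _); set y := (_ * _); lia.
have m3 : minn ql.+1 pl = pl by lia.
have m4 : minn ql pl = pl by lia.
rewrite m3 m4 in e2.
move: e1 e2; set x := (_ * _); set y := (_ * _); lia.
Qed.

Variables (d n : nat).
Local Notation pt := (pt d n).
Local Notation coord := Pilot.Defs.coord.

Lemma sum_upd (F : 'I_d -> nat -> nat) (x y : pt) (i : 'I_d) :
  (forall m, m != i -> coord x m = coord y m) ->
  (\sum_(m < d) F m (coord x m) + F i (coord y i) =
   \sum_(m < d) F m (coord y m) + F i (coord x i))%N.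
Proof.
move=> H.
rewrite (bigD1 i) //= [\sum_(m < d) F m (coord y m)](bigD1 i) //=.
rewrite (eq_bigr (fun m => F m (coord y m))) => [|m /H -> //].
lia.
Qed.

Lemma term_le (P : pred 'I_d) (F : 'I_d -> nat) j : P j ->
  (F j <= \sum_(m | P m) F m)%N.
Proof. by move=> Pj; rewrite (bigD1 j) //= leq_addr. Qed.

Lemma coord_eq (x y : pt) : (forall m, coord x m = coord y m) -> x = y.
Proof. by move=> H; apply/ffunP => m; apply/val_inj; exact: H. Qed.

Lemma l1_0 (x y : pt) : l1 x y = 0%N -> x = y.
Proof.
move=> H; apply: coord_eq => m.
have := @term_le xpredT (fun m => absdiff (coord x m) (coord y m)) m isT.
rewrite -/(l1 x y) H /absdiff; lia.
Qed.

Lemma l1_xx (x : pt) : l1 x x = 0%N.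
Proof. by rewrite /l1 big1 // => m _; rewrite /absdiff subnn. Qed.

Lemma l1_1 (x y : pt) : l1 x y = 1%N ->
  exists l, absdiff (coord x l) (coord y l) = 1%N /\
            forall m, m != l -> coord x m = coord y m.
Proof.
move=> H.
have [l Hl] : exists l, absdiff (coord x l) (coord y l) != 0%N.
  case: (pickP (fun l => absdiff (coord x l) (coord y l) != 0%N)) => [l Hl|Hn].
    by exists l.
  move: H; rewrite /l1 big1 // => m _; exact/eqP/negPn/negbT/Hn.
exists l.
move: H; rewrite /l1 (bigD1 l) //= => H.
have Hr : (\sum_(i < d | i != l) absdiff (coord x i) (coord y i) = 0)%N.
  by move: H Hl; set a := absdiff _ _; set S := bigop _ _ _; lia.
split; first by move: H Hl; set a := absdiff _ _; set S := bigop _ _ _; lia.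
move=> m ml.
have := @term_le (fun i => i != l) (fun m => absdiff (coord x m) (coord y m)) m ml.
rewrite Hr /absdiff; lia.
Qed.

Lemma l1_upd (x y : pt) i : (forall m, m != i -> coord x m = coord y m) ->
  l1 x y = absdiff (coord x i) (coord y i).
Proof.
move=> H; rewrite /l1 (bigD1 i) //= big1 ?addn0 // => m /H ->.
by rewrite /absdiff subnn.
Qed.


Definition psi (p x : pt) := (\sum_(m < d) (d - m) * minn (coord x m) (coord p m))%N.
Definition key (p x : pt) := (ssum x * (psi p p).+1 + psi p x)%N.

Lemma psi_le p x : (psi p x <= psi p p)%N.
Proof.
apply: leq_sum => m _; rewrite leq_mul2l; apply/orP; right; lia.
Qed.

Definition dec (q : pt) (i : 'I_d) : pt :=
  [ffun m => if m == i then inord (coord q i).-1 else q m].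

Lemma coord_dec q i m :
  coord (dec q i) m = if m == i then (coord q i).-1 else coord q m.
Proof.
rewrite /coord /dec ffunE; case: eqP => // _.
rewrite inordK //; have := ltn_ord (q i); rewrite /coord; lia.
Qed.

Lemma inDP (x : pt) : reflect (forall i, (1 <= coord x i <= n)%N) (inD x).
Proof. exact: forallP. Qed.

Lemma inD_nBd (x : pt) : inD x -> ~~ inBd x.
Proof.
move=> xD; rewrite /inBd negb_and; apply/orP; right.
apply/forallPn; exists x; by rewrite xD l1_xx.
Qed.

Lemma ssum_upd (x y : pt) i : (forall m, m != i -> coord x m = coord y m) ->
  (ssum x + coord y i = ssum y + coord x i)%N.
Proof. exact: (@sum_upd (fun _ a => a)). Qed.


Lemma geom t (p q : pt) : p \in Lt d n t -> q \in LtS d n t -> q != p ->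
  exists r, [/\ r \in LtS d n t.-1 :|: JS d n t.-1, ~~ edge p r, edge q r &
   forall q', q' != q -> edge q' r || (q' == r) -> (key p q' < key p q)%N].
Proof.
move=> pL qL qp.
move: pL qL; rewrite !inE => /andP[pD /eqP ps] /andP[qD qs].
have qDi := inDP _ qD.
have exj : exists j, (coord q j < coord p j)%N.
  case: (pickP (fun j => coord q j < coord p j)%N) => [j Hj|Hn]; first by exists j.
  exfalso; move/eqP: qp; apply; apply: coord_eq => m.
  have Hle : forall j, (coord p j <= coord q j)%N.
    by move=> j; have := Hn j; rewrite ltnNge => /negbFE.
  have Hs : (\sum_(i < d | i != m) coord p i <= \sum_(i < d | i != m) coord q i)%N.
    by apply: leq_sum => j _; exact: Hle.
  have := Hle m.
  move: ps qs Hs; rewrite /ssum (bigD1 m) //= [\sum_(i < d) coord q i](bigD1 m) //=.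
  set Sp := \sum_(i < d | i != m) coord p i; set Sq := \sum_(i < d | i != m) coord q i; lia.
case: exj => j0 Hj0.
case: (@arg_minnP _ j0 (fun j => coord q j < coord p j)%N (fun j : 'I_d => nat_of_ord j) Hj0) => i qi imin.
set r := dec q i.
have cr := coord_dec q i.
have cri : coord r i = (coord q i).-1 by rewrite cr eqxx.
have crm : forall m, m != i -> coord r m = coord q m by move=> m /negbTE mi; rewrite cr mi.
have crm' : forall m, m != i -> coord q m = coord r m by move=> m /crm ->.
have qi1 := qDi i.
have rq1 : l1 q r = 1%N.
  by rewrite (l1_upd crm') cri /absdiff; lia.
have pr1 : l1 p r = (l1 p q).+1.
  have := @sum_upd (fun m a => absdiff (coord p m) a) r q i crm.
  rewrite -/(l1 p r) -/(l1 p q) cri /absdiff; lia.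
have pq0 : l1 p q != 0%N.
  by apply/eqP => /l1_0 E; move: qp; rewrite E eqxx.
have sr : (ssum r + coord q i = ssum q + (coord q i).-1)%N.
  by have := ssum_upd crm; rewrite cri.
have Dr : inD r -> (ssum r <= t.-1)%N by move=> _; lia.
have rV : inV r /\ r \in LtS d n t.-1 :|: JS d n t.-1.
  case: (ltnP 1 (coord q i)) => H.
    have rD : inD r.
      apply/inDP => m; rewrite cr; case: eqP => _; last exact: qDi.
      lia.
    by rewrite /inV rD; split => //; rewrite !inE rD Dr.
  have rB : inBd r.
    apply/andP; split.
      by apply/existsP; exists q; rewrite qD rq1.
    apply/forallP => x; apply/implyP => xD; apply/eqP => /l1_0 E.
    have := inDP _ xD i; rewrite E cri; lia.
  rewrite /inV rB orbT; split => //.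
  rewrite !inE; apply/orP; right; apply/orP; left.
  apply/bigcupP.
  have lt : (ssum r < t.-1.+1)%N by lia.
  exists (Ordinal lt) => //.
  rewrite !inE rB eqxx /=; apply/existsP; exists i; rewrite cri; lia.
case: rV => rV rW.
have eqr : edge q r.
  by rewrite /edge rV rq1 eqxx (negbTE (inD_nBd qD)) /inV qD.
exists r; split => //.
  by apply/negP => /and4P[_ _ /eqP]; rewrite pr1; move: pq0; case: (l1 p q).
have psiM : forall x, (psi p x < (psi p p).+1)%N by move=> x; rewrite ltnS psi_le.
have lower : forall x, (ssum x < ssum q)%N -> (key p x < key p q)%N.
  by move=> x Hx; apply: lowerA.
move=> q' q'q /orP[Hedge | /eqP q'r].
  move: Hedge => /and4P[_ _ /eqP /l1_1 [l [Hl Hm]] _].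
  have sq' := ssum_upd Hm.
  case: (ltnP (coord q' l) (coord r l)) => Hlt.
    by apply: lower; clear -sq' Hlt sr qi1; lia.
  have q'l : coord q' l = (coord r l).+1 by move: Hl; rewrite /absdiff; clear -Hlt; lia.
  have ssq : ssum q' = ssum q by clear -sq' q'l sr qi1; lia.
  case: (eqVneq l i) => [li|li].
    subst l; move: q'q; rewrite (coord_eq (x:=q') (y:=q)) ?eqxx //.
    move=> m; case: (eqVneq m i) => [->|mi]; first by rewrite q'l cri; clear -qi1; lia.
    by rewrite Hm // crm.
  have e1 := @sum_upd (fun m a => (d - m) * minn a (coord p m))%N r q i crm.
  have e2 := @sum_upd (fun m a => (d - m) * minn a (coord p m))%N q' r l Hm.
  rewrite /= -!/(psi p _) in e1 e2.
  rewrite /key ssq ltn_add2l.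
  rewrite cri in e1; rewrite q'l crm // in e2.
  apply: (tailA (ltn_ord i) (ltn_ord l) _ qi _ e1 e2).
    by case/andP: qi1.
  move=> Hql; have := imin l Hql.
  have : (nat_of_ord i != l) by apply: contra li => /eqP /val_inj ->.
  clear; lia.
rewrite q'r; apply: lower; clear -sr qi1; lia.
Qed.

End Aux.

Local Open Scope ring_scope.

Theorem corollary3p5 (R : realType) (d n t : nat)
  (gamma : pt d n -> pt d n -> R) (p : pt d n) :
  (2 <= d)%N -> (1 <= n)%N -> (d <= t <= d * n)%N ->
  (forall x y, edge x y -> gamma x y = gamma y x) ->
  (forall x y, edge x y -> 0 < gamma x y) ->
  p \in Lt d n t ->
  let Mp := nbr p :&: (JS d n (t.-1) :|: LtS d n (t.-1)) in
  let W := LtS d n (t.-1) :|: JS d n (t.-1) in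
  lin_indep (LtS d n t :\ p) (W :\: Mp) (vvec gamma) /\
  (forall w : pt d n -> R,
     in_span (LtS d n t) W (vvec gamma) w ->
     (forall r, r \in W -> r \notin Mp -> w r = 0) ->
     exists alpha : R, forall r, r \in W -> w r = alpha * vvec gamma p r).
Proof.
move=> d2 n1 /andP[dt tdn] gsym gpos pL Mp W.
have gvq : forall q r, edge q r -> vvec gamma q r = gamma q r.
  by move=> q r e; rewrite /vvec inE e.
have vnz : forall q r, vvec gamma q r != 0 -> edge q r || (q == r).
  move=> q r; rewrite /vvec inE; case: (edge q r) => //=.
  by case: ifP => [/eqP -> _|_]; rewrite eqxx.
have main : lin_indep (LtS d n t :\ p) (W :\: Mp) (vvec gamma).
  move=> c Hc.
  suff H : forall k q, q \in LtS d n t :\ p -> (key p q < k)%N -> c q = 0.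
    by move=> q qA; exact: (H _ q qA (ltnSn _)).
  elim=> [//|k IH] q qA Hk.
  have := qA; rewrite !inE => /andP[qp qL'].
  have qL : q \in LtS d n t by rewrite inE.
  have [r [rW npr eqr Hkey]] := geom pL qL qp.
  have rWM : r \in W :\: Mp by rewrite /Mp /W !inE (negbTE npr) /=; rewrite !inE in rW.
  have := Hc r rWM.
  rewrite (bigD1 q) //= big1 ?addr0.
    move/eqP; rewrite mulf_eq0 gvq // => /orP[/eqP //|].
    by rewrite gt_eqF // gpos.
  move=> q' /andP[q'A q'q].
  case: (eqVneq (vvec gamma q' r) 0) => [->|nz]; first by rewrite mulr0.
  rewrite (IH q') ?mul0r //.
  have := Hkey q' q'q (vnz _ _ nz); clear -Hk; lia.
split; first exact: main.
move=> w [c Hc] Hw.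
have pD : inD p by move: pL; rewrite inE => /andP[].
have ps : ssum p = t by move: pL; rewrite inE => /andP[_ /eqP].
have pLS : p \in LtS d n t by rewrite inE pD ps leqnn.
have pnW : p \notin W.
  apply/negP; rewrite /W !inE => /orP[/andP[_]| /orP[/bigcupP[l _] | /bigcupP[l _]]].
  - by rewrite ps; clear -dt d2; lia.
  - by rewrite !inE (negbTE (inD_nBd pD)).
  - by rewrite !inE (negbTE (inD_nBd pD)).
have c0 : forall q, q \in LtS d n t :\ p -> c q = 0.
  apply: main => r; rewrite inE => /andP[rnM rW].
  have := Hc r rW; rewrite Hw // (bigD1 p) /=; last exact: pLS.
  have -> : vvec gamma p r = 0.
    rewrite /vvec inE.
    have -> : edge p r = false.
      apply/negP => e; move: rnM; rewrite /Mp !inE e /=.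
      by move: rW; rewrite /W !inE => /orP[->|->]; rewrite ?orbT.
    case: eqP => // E; by move: pnW; rewrite -E rW.
  rewrite mulr0 add0r => E; rewrite [RHS]E.
  by apply: eq_bigl => q; rewrite !inE andbC.
exists (c p) => r rW.
rewrite Hc // (bigD1 p) /=; last exact: pLS.
rewrite big1 ?addr0 // => q /andP[qL qp].
by rewrite c0 ?mul0r // in_setD1 qp qL.
Qed.
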